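(* Let $H$ be a bounded strongly planar embedding of a marked poset $(P,A,\lambda)$, and let $F$ be a bounded face of $H$ not containing either of the two additional edges joining $\hat0$ and $\hat1$. Suppose the left boundary of $F$ is the chain $p_1>p_2>\cdots>p_k$ and the right boundary is $p_1=q_1>q_2>\cdots>q_\ell=p_k$. Let $L_1,\dots,L_{\mathcal N}$, $\mathcal N=\binom{k+\ell-4}{\ell-2}$, be the total orders on $\{p_1,\dots,p_k,q_2,\dots,q_{\ell-1}\}$ extending both chains, and let $\widehat P_j$ be the poset on $\widehat P$ whose order is generated by the order of $\widehat P$ together with $L_j$. Then $\bigcup_{j=1}^{\mathcal N}\mathcal{O}(\widehat P_j,\widehat A)_\lambda=\mathcal{O}(\widehat P,\widehat A)_\lambda$, and for $i\ne j$ the intersection $\mathcal{O}(\widehat P_i,\widehat A)_\lambda\cap\mathcal{O}(\widehat P_j,\widehat A)_\lambda$ is a common face of both polytopes (possibly empty); i.e. these polytopes form a subdivision of $\mathcal{O}(\widehat P,\widehat A)_\lambda$.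
   Context: A marked poset $(P,A,\lambda)$ consists of a finite poset $P$, a subposet $A\subseteq P$ containing all minimal and all maximal elements of $P$, and an order-preserving map $\lambda:A\to\mathbb{R}$. For a poset $Q$, $B\subseteq Q$ and $\mu:B\to\mathbb{R}$, $\mathcal{O}(Q,B)_\mu=\{x\in\mathbb{R}^Q:x_p\le x_q\text{ for }p<q\text{ in }Q,\ x_b=\mu(b)\text{ for }b\in B\}$. Let $\widehat P=P\sqcup\{\hat0,\hat1\}$ with $\hat0<p<\hat1$ for all $p\in P$, $\widehat A=A\cup\{\hat0,\hat1\}$, and extend $\lambda$ by $\lambda(\hat0)=\min_{a\in A}\lambda(a)$, $\lambda(\hat1)=\max_{a\in A}\lambda(a)$ (so $\mathcal{O}(\widehat P,\widehat A)_\lambda$ is $\mathcal{O}(P,A)_\lambda$ with two fixed coordinates appended); elements of $\widehat A$ are called marked. $P$ is strongly planar if the Hasse diagram of $\widehat P$ has a planar drawing in which $y$-coordinates strictly increase along every covering relation. A bounded embedding $H$ is such a drawing together with two additional edges joining $\hat0$ and $\hat1$, one drawn to the left of everything else and one to the right, regarded as a plane graph. For a bounded face $F$ of $H$, $\min F$ and $\max F$ are the least and greatest elements of $\widehat P$ on its boundary; removing them splits the boundary into two paths, and the left (resp. right) boundary of $F$ is the left (resp. right) path together with $\min F$ and $\max F$ (each is a saturated chain). $H$ is a bounded strongly planar embedding of $(P,A,\lambda)$ if for every bounded face $F$ whose left boundary contains an element of $\widehat A$, both $\min F$ and $\max F$ lie in $\widehat A$. *)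

(* Defs.v *)
From Stdlib Require Import Reals Relations.
From mathcomp Require Import all_boot.
Set Implicit Arguments. Unset Strict Implicit. Unset Printing Implicit Defensive.
Open Scope R_scope.

(* \hat P = P + {\hat0, \hat1}: None = \hat0, Some None = \hat1, Some (Some a) = a *)
Notation hat P := (option (option P)).
Definition hbot {P : Type} : hat P := None.
Definition htop {P : Type} : hat P := Some None.
Definition helt {P : Type} (a : P) : hat P := Some (Some a).

Definition is_poset (P : Type) (le : P -> P -> Prop) : Prop :=
  (forall a, le a a) /\
  (forall a b, le a b -> le b a -> a = b) /\
  (forall a b c, le a b -> le b c -> le a c).

Definition hle {P : Type} (le : P -> P -> Prop) (u v : hat P) : Prop :=
  match u, v with
  | None, _ => True
  | _, Some None => True
  | Some (Some a), Some (Some b) => le a b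
  | _, _ => False
  end.
Definition hlt {P : Type} (le : P -> P -> Prop) (u v : hat P) : Prop :=
  hle le u v /\ u <> v.
Definition hcov {P : Type} (le : P -> P -> Prop) (u v : hat P) : Prop :=
  hlt le u v /\ ~ (exists w, hlt le u w /\ hlt le w v).

Definition hmarked {P : Type} (A : P -> Prop) (u : hat P) : Prop :=
  match u with Some (Some a) => A a | _ => True end.

(* (P, A, lam) is a marked poset; A is given as a predicate, lam on A *)
Definition marked_poset {P : Type} (le : P -> P -> Prop) (A : P -> Prop)
    (lam : P -> R) : Prop :=
  is_poset le /\
  (forall p, (forall q, le q p -> q = p) -> A p) /\
  (forall p, (forall q, le p q -> q = p) -> A p) /\
  (forall a b, A a -> A b -> le a b -> (lam a <= lam b)).

Definition is_minval {P : Type} (A : P -> Prop) (lam : P -> R) (m : R) : Prop :=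
  (exists a, A a /\ lam a = m) /\ (forall a, A a -> (m <= lam a)).
Definition is_maxval {P : Type} (A : P -> Prop) (lam : P -> R) (M : R) : Prop :=
  (exists a, A a /\ lam a = M) /\ (forall a, A a -> (lam a <= M)).

(* O(Q, \hat A)_lam  in R^{\hat P}, for an order relation Q on \hat P;
   lam is extended by lam(\hat0) = min, lam(\hat1) = max. *)
Definition opoly {P : Type} (Q : hat P -> hat P -> Prop) (A : P -> Prop)
    (lam : P -> R) (x : hat P -> R) : Prop :=
  (forall u v, Q u v -> (x u <= x v)) /\
  (forall a, A a -> x (helt a) = lam a) /\
  is_minval A lam (x hbot) /\ is_maxval A lam (x htop).

Definition linf {P : finType} (c x : hat P -> R) : R :=
  \big[Rplus/0]_(u : hat P) (c u * x u).

(* Fc is a face of the polytope K (empty set and K itself included) *)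
Definition is_face {P : finType} (K Fc : (hat P -> R) -> Prop) : Prop :=
  exists (c : hat P -> R) (b : R),
    (forall x, K x -> (linf c x <= b)) /\
    (forall x, Fc x <-> (K x /\ linf c x = b)).

Definition pt := (R * R)%type.

(* curve identifiers: Hasse edge u -> v, left extra edge, right extra edge *)
Inductive cid (P : Type) := CE of hat P & hat P | CL | CR.
Arguments CL {P}. Arguments CR {P}.

Record drawing (P : Type) := Drawing {
  dpos : hat P -> pt;
  dedge : hat P -> hat P -> R -> pt;  (* curve (on [0,1]) of the edge u -> v *)
  dleft : R -> pt;                    (* extra edge \hat0 -> \hat1 on the left *)
  dright : R -> pt                    (* extra edge \hat0 -> \hat1 on the right *)
}.

Definition dcurve {P : Type} (D : drawing P) (c : cid P) : R -> pt :=
  match c with CE u v => dedge D u v | CL => dleft D | CR => dright D end.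
Definition cvalid {P : Type} (le : P -> P -> Prop) (c : cid P) : Prop :=
  match c with CE u v => hcov le u v | _ => True end.
Definition cstart {P : Type} (c : cid P) : hat P :=
  match c with CE u _ => u | _ => hbot end.
Definition cend {P : Type} (c : cid P) : hat P :=
  match c with CE _ v => v | _ => htop end.

Definition in01 (t : R) : Prop := (0 <= t <= 1).
Definition open01 (t : R) : Prop := (0 < t < 1).

Definition cont_path (g : R -> pt) : Prop :=
  continuity (fun t => fst (g t)) /\ continuity (fun t => snd (g t)).

Definition up_curve (g : R -> pt) (a b : pt) : Prop :=
  cont_path g /\ g 0 = a /\ g 1 = b /\
  (forall s t, (0 <= s) -> (s < t) -> (t <= 1) -> (snd (g s) < snd (g t))).

Definition dimg {P : Type} (le : P -> P -> Prop) (D : drawing P) (z : pt) : Prop :=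
  (exists w, z = dpos D w) \/
  (exists c t, cvalid le c /\ in01 t /\ z = dcurve D c t).

Definition bounded_strongly_planar {P : Type} (le : P -> P -> Prop)
    (D : drawing P) : Prop :=
  (forall u v, dpos D u = dpos D v -> u = v) /\
  (forall c, cvalid le c -> up_curve (dcurve D c) (dpos D (cstart c)) (dpos D (cend c))) /\
  (forall c t w, cvalid le c -> open01 t -> dcurve D c t <> dpos D w) /\
  (forall c1 c2 s t, cvalid le c1 -> cvalid le c2 -> c1 <> c2 ->
     open01 s -> open01 t -> dcurve D c1 s <> dcurve D c2 t) /\
  (* the left extra edge lies to the left of everything else *)
  (forall z, dimg le D z -> (forall t, in01 t -> z <> dleft D t) ->
     exists t, in01 t /\ snd (dleft D t) = snd z /\ (fst (dleft D t) < fst z)) /\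
  (* the right extra edge lies to the right of everything else *)
  (forall z, dimg le D z -> (forall t, in01 t -> z <> dright D t) ->
     exists t, in01 t /\ snd (dright D t) = snd z /\ (fst z < fst (dright D t))).

(* F is a face: a path-connected component of R^2 minus the drawing *)
Definition dface {P : Type} (le : P -> P -> Prop) (D : drawing P) (F : pt -> Prop) : Prop :=
  exists z0, ~ dimg le D z0 /\
    forall z, F z <-> (~ dimg le D z /\
       exists g, cont_path g /\ g 0 = z0 /\ g 1 = z /\
                 forall t, in01 t -> ~ dimg le D (g t)).

Definition pbounded (F : pt -> Prop) : Prop :=
  exists M, forall z, F z -> (Rabs (fst z) <= M /\ Rabs (snd z) <= M).

Definition pclosure (F : pt -> Prop) (z : pt) : Prop :=
  forall eps, (0 < eps) -> exists w, F w /\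
    (Rabs (fst w - fst z) < eps) /\ (Rabs (snd w - snd z) < eps).

Definition on_bd {P : Type} (D : drawing P) (F : pt -> Prop) (v : hat P) : Prop :=
  pclosure F (dpos D v).
Definition face_min {P : Type} (le : P -> P -> Prop) (D : drawing P) (F : pt -> Prop)
    (m : hat P) : Prop :=
  on_bd D F m /\ forall v, on_bd D F v -> hle le m v.
Definition face_max {P : Type} (le : P -> P -> Prop) (D : drawing P) (F : pt -> Prop)
    (m : hat P) : Prop :=
  on_bd D F m /\ forall v, on_bd D F v -> hle le v m.

Definition face_on_right (F : pt -> Prop) (g : R -> pt) : Prop :=
  forall t, open01 t -> exists eps, (0 < eps) /\
    forall d, (0 < d < eps) -> F (fst (g t) + d, snd (g t)).
Definition face_on_left (F : pt -> Prop) (g : R -> pt) : Prop :=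
  forall t, open01 t -> exists eps, (0 < eps) /\
    forall d, (0 < d < eps) -> F (fst (g t) - d, snd (g t)).

(* elements of the left (resp. right) boundary of F: min F, max F, and the
   endpoints of the edges of the boundary having F on their right (resp. left) *)
Definition left_bd {P : Type} (le : P -> P -> Prop) (D : drawing P) (F : pt -> Prop)
    (v : hat P) : Prop :=
  face_min le D F v \/ face_max le D F v \/
  exists w, (hcov le v w /\ face_on_right F (dedge D v w)) \/
            (hcov le w v /\ face_on_right F (dedge D w v)).
Definition right_bd {P : Type} (le : P -> P -> Prop) (D : drawing P) (F : pt -> Prop)
    (v : hat P) : Prop :=
  face_min le D F v \/ face_max le D F v \/
  exists w, (hcov le v w /\ face_on_left F (dedge D v w)) \/
            (hcov le w v /\ face_on_left F (dedge D w v)).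

Definition bounded_embedding_of {P : Type} (le : P -> P -> Prop) (A : P -> Prop)
    (D : drawing P) : Prop :=
  bounded_strongly_planar le D /\
  forall F, dface le D F -> pbounded F ->
    (exists v, hmarked A v /\ left_bd le D F v) ->
    (forall m, face_min le D F m -> hmarked A m) /\
    (forall m, face_max le D F m -> hmarked A m).

Definition desc_chain {P : eqType} (le : P -> P -> Prop) (s : seq (hat P)) : Prop :=
  forall i j, (i < j < size s)%N -> hlt le (nth hbot s j) (nth hbot s i).

Definition chain_lin_ext {P : eqType} (p q : seq (hat P))
    (L : hat P -> hat P -> Prop) : Prop :=
  (forall u v, L u v -> u \in p ++ q /\ v \in p ++ q) /\
  (forall u, u \in p ++ q -> L u u) /\
  (forall u v, L u v -> L v u -> u = v) /\
  (forall u v w, L u v -> L v w -> L u w) /\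
  (forall u v, u \in p ++ q -> v \in p ++ q -> L u v \/ L v u) /\
  (forall i j, (i < j < size p)%N -> L (nth hbot p j) (nth hbot p i)) /\
  (forall i j, (i < j < size q)%N -> L (nth hbot q j) (nth hbot q i)).

Definition gen_order {P : Type} (le : P -> P -> Prop) (L : hat P -> hat P -> Prop) :
    hat P -> hat P -> Prop :=
  clos_refl_trans (hat P) (fun u v => hle le u v \/ L u v).

(* Main.v *)
Require Import Defs.
From Stdlib Require Import Reals Relations.
From mathcomp Require Import all_boot.
Open Scope R_scope.
From Stdlib Require Import Lra ClassicalEpsilon.
From HB Require Import structures.
From mathcomp Require Import zify.
Lemma Rplus_assoc' : associative Rplus.
Proof. move=> a b c; by rewrite Rplus_assoc. Qed.
HB.instance Definition _ := Monoid.isComLaw.Build R 0 Rplus Rplus_assoc' Rplus_comm Rplus_0_l.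

Definition dec (Q : Prop) : bool := if excluded_middle_informative Q then true else false.
Lemma decP Q : reflect Q (dec Q).
Proof. rewrite /dec; case: excluded_middle_informative => h; by constructor. Qed.

Section S.
Variable P : finType.
Implicit Types (x c : hat P -> R).

Lemma linf_ind x (u : hat P) k : linf (fun w => if w == u then k else 0) x = k * x u.
Proof.
rewrite /linf (bigD1 u) //= eqxx big1 => [|w /negbTE ->]; lra.
Qed.
Lemma linf_add x c1 c2 : linf (fun w => c1 w + c2 w) x = linf c1 x + linf c2 x.
Proof. rewrite /linf -big_split; apply: eq_bigr => w _ /=; lra. Qed.
Lemma linf0 x : linf (fun _ => 0) x = 0.
Proof. rewrite /linf big1 // => w _; lra. Qed.
Variable le : P -> P -> Prop.
Hypothesis hpos : is_poset le.

Lemma hle_trans (u v w : hat P) : hle le u v -> hle le v w -> hle le u w.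
Proof.
case: hpos => _ [_ tr].
case: u => [[a|]|]; case: v => [[b|]|]; case: w => [[c|]|] //=; eauto.
Qed.
Lemma hle_anti (u v : hat P) : hle le u v -> hle le v u -> u = v.
Proof.
case: hpos => _ [an _].
case: u => [[a|]|]; case: v => [[b|]|] //= h1 h2; by rewrite (an _ _ h1 h2).
Qed.
Lemma hlt_trans (u v w : hat P) : hlt le u v -> hlt le v w -> hlt le u w.
Proof.
move=> [h1 n1] [h2 n2]; split; first exact: hle_trans h1 h2.
move=> e; subst w; apply: n1; exact: hle_anti h1 h2.
Qed.

Definition rk (u : hat P) : nat := #|[pred w : hat P | dec (hlt le w u)]|.

Lemma rk_lt a b : hlt le a b -> (rk a < rk b)%N.
Proof.
move=> hab; apply: proper_card; apply/properP; split.
  apply/subsetP => w; rewrite !inE => /decP h; apply/decP; exact: hlt_trans h hab.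
exists a; rewrite !inE; first by apply/decP.
by apply/decP => -[_].
Qed.

Lemma gen_ok (L : hat P -> hat P -> Prop) x :
  (forall u v, hle le u v -> x u <= x v) -> (forall u v, L u v -> x u <= x v) ->
  forall u v, gen_order le L u v -> x u <= x v.
Proof.
move=> h1 h2 u v; elim => {u v}.
- move=> u v [/h1|/h2] //.
- move=> u; lra.
- move=> u v w _ ? _ ?; lra.
Qed.

Lemma opoly_gen_iff (A : P -> Prop) lam L x :
  opoly (gen_order le L) A lam x <->
  opoly (hle le) A lam x /\ (forall u v, L u v -> x u <= x v).
Proof.
split.
- move=> [h [a [b c]]]; split; first split => //.
  + move=> u v huv; apply: h; apply: rt_step; by left.
  + move=> u v huv; apply: h; apply: rt_step; by right.
- move=> [[h [a [b c]]] hL]; split => //; exact: gen_ok.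
Qed.

Fixpoint cf (ps : seq (hat P * hat P)) : hat P -> R :=
  match ps with
  | [::] => fun _ => 0
  | uv :: ps' => fun w => (if w == uv.1 then 1 else 0) +
                          ((if w == uv.2 then -1 else 0) + cf ps' w)
  end.
Fixpoint sumd (ps : seq (hat P * hat P)) x : R :=
  match ps with
  | [::] => 0
  | uv :: ps' => x uv.1 - x uv.2 + sumd ps' x
  end.
Lemma linf_cf ps x : linf (cf ps) x = sumd ps x.
Proof.
elim: ps => [|uv ps IH] /=; first exact: linf0.
rewrite linf_add linf_add linf_ind linf_ind IH; lra.
Qed.
Lemma sumd_le ps x : (forall uv, uv \in ps -> x uv.1 <= x uv.2) -> sumd ps x <= 0.
Proof.
elim: ps => [|[a b] ps IH] /= h; first lra.
have h1 := h (a, b) (mem_head _ _). simpl in h1.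
have h2 : sumd ps x <= 0 by apply: IH => w hw; apply: h; rewrite inE hw orbT.
lra.
Qed.
Lemma sumd_eq ps x : (forall uv, uv \in ps -> x uv.1 <= x uv.2) -> sumd ps x = 0 ->
  forall uv, uv \in ps -> x uv.1 = x uv.2.
Proof.
elim: ps => [|[a b] ps IH] //= h hs w.
have h1 := h (a, b) (mem_head _ _). simpl in h1.
have h' : forall w, w \in ps -> x w.1 <= x w.2 by move=> w' hw; apply: h; rewrite inE hw orbT.
have h2 := sumd_le _ _ h'.
have e1 : x a = x b by lra.
have e2 : sumd ps x = 0 by lra.
rewrite inE => /orP [/eqP -> //| hw]; exact: IH.
Qed.

Lemma face_lemma (A : P -> Prop) lam (p q : seq (hat P)) L1 L2 :
  chain_lin_ext p q L1 -> chain_lin_ext p q L2 ->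
  is_face (opoly (gen_order le L1) A lam)
    (fun x => opoly (gen_order le L1) A lam x /\ opoly (gen_order le L2) A lam x).
Proof.
move=> [d1 [_ [_ [_ [tot1 _]]]]] [d2 _].
set ps := [seq uv <- [seq (u, v) | u <- enum {: hat P}, v <- enum {: hat P}] |
            dec (L1 uv.1 uv.2 /\ L2 uv.2 uv.1)].
have memps : forall u v, L1 u v -> L2 v u -> (u, v) \in ps.
  move=> u v h1 h2; rewrite mem_filter; apply/andP; split; first by apply/decP.
  by apply/allpairsP; exists (u, v); rewrite !mem_enum.
have psP : forall uv, uv \in ps -> L1 uv.1 uv.2 /\ L2 uv.2 uv.1.
  by move=> uv; rewrite mem_filter => /andP [/decP].
have le1 : forall x, opoly (gen_order le L1) A lam x ->
   forall uv, uv \in ps -> x uv.1 <= x uv.2.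
  move=> x /opoly_gen_iff [_ h] uv /psP [] ? _; exact: h.
exists (cf ps), 0; split.
  move=> x hx; rewrite linf_cf; exact: sumd_le _ _ (le1 x hx).
move=> x; split.
- move=> [hx1 hx2]; split => //; rewrite linf_cf.
  have [/opoly_gen_iff [_ a] /opoly_gen_iff [_ b]] := conj hx1 hx2.
  have : forall uv, uv \in ps -> L1 uv.1 uv.2 /\ L2 uv.2 uv.1 by [].
  elim: (ps) => [|[u v] ps' IH] //= psP'.
  have [c1 c2] := psP' (u, v) (mem_head _ _).
  have := a _ _ c1; have := b _ _ c2.
  rewrite IH.
  + simpl; lra.
  + move=> w hw; apply: psP'; rewrite inE hw orbT //=.
- move=> [hx1 hs]; split => //.
  rewrite linf_cf in hs.
  have heq := sumd_eq _ _ (le1 x hx1) hs.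
  move/opoly_gen_iff: (hx1) => [ho h1]; apply/opoly_gen_iff; split => //.
  move=> u v huv; have [hu hv] := d2 _ _ huv.
  case: (tot1 u v hu hv) => h; first exact: h1.
  have := heq _ (memps _ _ h huv) => /= ->; lra.
Qed.

Definition lexle (u v : hat P) : Prop :=
  (rk u < rk v)%N \/ (rk u = rk v /\ (enum_rank u <= enum_rank v)%N).

Lemma exists_L (A : P -> Prop) lam (p q : seq (hat P)) x :
  desc_chain le p -> desc_chain le q -> opoly (hle le) A lam x ->
  exists L, chain_lin_ext p q L /\ opoly (gen_order le L) A lam x.
Proof.
move=> hp hq hx.
have xm : forall u v, hle le u v -> x u <= x v by case: hx.
pose L u v := u \in p ++ q /\ v \in p ++ q /\ (x u < x v \/ (x u = x v /\ lexle u v)).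
have chainL : forall s, desc_chain le s -> {subset s <= p ++ q} ->
    forall i j, (i < j < size s)%N -> L (nth hbot s j) (nth hbot s i).
  move=> s hs sub i j hij; have h := hs i j hij.
  have hi : (i < size s)%N by case/andP: hij => a b; apply: ltn_trans a b.
  have hj : (j < size s)%N by case/andP: hij.
  split; first by apply: sub; apply: mem_nth.
  split; first by apply: sub; apply: mem_nth.
  have := xm _ _ (proj1 h); case/Rle_lt_or_eq_dec => e; first by left.
  right; split => //; left; exact: rk_lt.
exists L; split.
  split; first by move=> u v [? [? _]].
  split; first by move=> u hu; split => //; split => //; right; split => //; right; split => //.
  split.
    move=> u v [_ [_ h1]] [_ [_ h2]].
    case: h1 => [l1|[e1 n1]]; case: h2 => [l2|[e2 n2]]; try lra.
    move: n1 n2; rewrite /lexle => n1 n2.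
    have e : nat_of_ord (enum_rank u) = nat_of_ord (enum_rank v) by lia.
    by move/val_inj/enum_rank_inj: e.
  split.
    move=> u v w [hu [_ h1]] [_ [hw h2]]; split => //; split => //.
    case: h1 => [l1|[e1 n1]]; case: h2 => [l2|[e2 n2]]; try (left; lra).
    right; split; first lra.
    move: n1 n2; rewrite /lexle => n1 n2; lia.
  split.
    move=> u v hu hv; rewrite /L /lexle.
    case: (Rtotal_order (x u) (x v)) => [l|[e|l]].
    - by left; split => //; split => //; left.
    - have : ((rk u < rk v)%N \/ (rk u = rk v /\ (enum_rank u <= enum_rank v)%N)) \/
             ((rk v < rk u)%N \/ (rk v = rk u /\ (enum_rank v <= enum_rank u)%N)) by lia.
      move=> [h|h]; [left|right]; split => //; split => //; right; (split; [lra|exact h]).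
    - by right; split => //; split => //; left.
  split.
    apply: chainL => // u hu; rewrite mem_cat hu //.
  apply: chainL => // u hu; rewrite mem_cat hu orbT //.
apply/opoly_gen_iff; split => //.
move=> u v [_ [_ [l|[e _]]]]; lra.
Qed.
End S.

Theorem lemma5p2 (P : finType) (le : P -> P -> Prop) (A : P -> Prop) (lam : P -> R)
    (D : drawing P) (F : pt -> Prop) (p q : seq (hat P)) :
  marked_poset le A lam ->
  bounded_embedding_of le A D ->
  dface le D F -> pbounded F ->
  ~ (exists t, open01 t /\ pclosure F (dleft D t)) ->
  ~ (exists t, open01 t /\ pclosure F (dright D t)) ->
  desc_chain le p -> (forall v, v \in p <-> left_bd le D F v) ->
  desc_chain le q -> (forall v, v \in q <-> right_bd le D F v) ->
  head hbot q = head hbot p -> last hbot q = last hbot p ->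
  (forall x, opoly (hle le) A lam x <->
     exists L, chain_lin_ext p q L /\ opoly (gen_order le L) A lam x) /\
  (forall L1 L2, chain_lin_ext p q L1 -> chain_lin_ext p q L2 ->
     ~ (forall u v, L1 u v <-> L2 u v) ->
     is_face (opoly (gen_order le L1) A lam)
             (fun x => opoly (gen_order le L1) A lam x /\ opoly (gen_order le L2) A lam x) /\
     is_face (opoly (gen_order le L2) A lam)
             (fun x => opoly (gen_order le L1) A lam x /\ opoly (gen_order le L2) A lam x)).
Proof.
move=> [hpos _] _ _ _ _ _ hp _ hq _ _ _; split.
  move=> x; split; first exact: exists_L.
  by move=> [L [_ /opoly_gen_iff [h _]]].
move=> L1 L2 h1 h2 _; split; first exact: face_lemma h1 h2.
have [c [b [hb hF]]] := face_lemma P le A lam p q L2 L1 h2 h1.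
exists c, b; split => // x; have := hF x; tauto.
Qed.
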